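(* Let $s\ge1$ be a real number and let $X\subseteq Y\subseteq V$. If $X$ is $s$-sparse in $Y$, then $w(X)\le \frac{1}{s}\,w(Y)$.
   Context: Let $G$ be a finite graph with vertex set $V$, $|V|=n$, and $t=\chi_f(G)$. Fix a weight function $w:V\to\mathbb{R}_{\ge0}$ with $w(V)=t$ and $w(I)\le 1$ for every independent set $I$ of $G$, where $w(A)=\sum_{v\in A}w(v)$. List the vertices as $v_1,\dots,v_n$ so that $w(v_{i+1})\le w(v_i)$ for all $i$. Every subset $X\subseteq V$ is ordered according to this ordering of $V$, and $X_k$ denotes the set of the first $k$ elements of $X$; for real $s\ge1$, $X_s:=X_{\lfloor s\rfloor}$. For real $s\ge1$ and $Y\subseteq V$, a nonempty subset $X\subseteq Y$ is called $s$-principal in $Y$ if $X\subseteq Y_{s|X|}$ (i.e., all elements of $X$ are among the first $\lfloor s|X|\rfloor$ elements of $Y$). A subset $X\subseteq Y$ is called $s$-sparse in $Y$ if $X$ contains no subset that is $s$-principal in $Y$. *)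

(* Defs.v *)
From mathcomp Require Import all_boot all_order all_algebra.
From mathcomp Require Import reals.
Set Implicit Arguments. Unset Strict Implicit. Unset Printing Implicit Defensive.
Import Order.TTheory GRing.Theory Num.Theory.
Local Open Scope ring_scope.

Definition simple_graph (V : finType) (e : rel V) : Prop :=
  symmetric e /\ irreflexive e.

Definition independent (V : finType) (e : rel V) (I : {set V}) : bool :=
  [forall x in I, forall y in I, ~~ e x y].

Definition wsum (R : realType) (V : finType) (w : V -> R) (A : {set V}) : R :=
  \sum_(v in A) w v.

Definition frac_colouring (R : realType) (V : finType) (e : rel V)
  (y : {set V} -> R) : Prop :=
  (forall I, 0 <= y I) /\ (forall I, y I != 0 -> independent e I) /\
  (forall v, 1 <= \sum_(I : {set V} | v \in I) y I).

Definition frac_total (R : realType) (V : finType) (y : {set V} -> R) : R :=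
  \sum_(I : {set V}) y I.

Definition is_frac_chromatic_number (R : realType) (V : finType) (e : rel V)
  (t : R) : Prop :=
  (exists y, frac_colouring e y /\ frac_total y = t) /\
  (forall y, frac_colouring e y -> t <= frac_total y).

Definition first_k (V : finType) (vs : seq V) (X : {set V}) (k : nat) : {set V} :=
  [set v in take k [seq x <- vs | x \in X]].

Definition principal (R : realType) (V : finType) (vs : seq V) (s : R)
  (Y X : {set V}) : bool :=
  [&& X != set0, X \subset Y &
      X \subset first_k vs Y (Num.truncn (s * #|X|%:R))].

Definition sparse (R : realType) (V : finType) (vs : seq V) (s : R)
  (Y X : {set V}) : bool :=
  (X \subset Y) && [forall Z : {set V}, (Z \subset X) ==> ~~ principal vs s Y Z].

(* Main.v *)
Require Import Defs.
From mathcomp Require Import all_boot all_order all_algebra.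
From mathcomp Require Import reals.
From mathcomp Require Import ring.
Import Order.TTheory GRing.Theory Num.Theory.
Local Open Scope ring_scope.
Lemma abel (R : realType) (T : eqType) (e a : T -> R) (l : seq T) (z : R) :
  (forall i, (i <= size l)%N -> 0 <= \sum_(y <- take i l) e y) ->
  pairwise (fun u v => a v <= a u) l ->
  (forall y, y \in l -> z <= a y) ->
  (\sum_(y <- l) e y) * z <= \sum_(y <- l) e y * a y.
Proof.
elim/last_ind: l z => [|l x IH] z Hp Hs Hz; first by rewrite !big_nil mul0r.
have Hsz : forall i, (i <= size l)%N -> take i (rcons l x) = take i l.
  by move=> i Hi; rewrite -cats1 takel_cat.
move: Hs; rewrite -cats1 pairwise_cat => /and3P [Hr Hl _].
have Hax : forall y, y \in l -> a x <= a y.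
  by move=> y Hy; move/allrelP: Hr => /(_ y x Hy); rewrite mem_seq1 eqxx; apply.
have IH' := IH (a x).
have Ht : 0 <= \sum_(y <- l ++ [:: x]) e y.
  by have := Hp (size (rcons l x)) (leqnn _); rewrite take_size cats1.
have Hzx : z <= a x by apply: Hz; rewrite -cats1 mem_cat mem_seq1 eqxx orbT.
rewrite !big_cat !big_seq1 /=.
apply: (le_trans (y := (\sum_(y <- l) e y + e x) * a x)).
  apply: ler_wpM2l => //.
  by move: Ht; rewrite big_cat big_seq1.
rewrite mulrDl lerD2r; apply: IH' => //.
by move=> i Hi; rewrite -Hsz //; apply: Hp; rewrite size_rcons; apply: leqW.
Qed.
Lemma sum_e (R : realType) (T : eqType) (P : pred T) (s : R) (l : seq T) :
  \sum_(y <- l) (1 - s * (P y)%:R) = (size l)%:R - s * (count P l)%:R.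
Proof.
elim: l => [|x l IH]; first by rewrite big_nil /= mulr0 subr0.
rewrite big_cons IH /= -addn1 addnC !natrD; ring.
Qed.

Lemma sum_vs (R : realType) (V : finType) (vs : seq V) (P : pred V) (F : V -> R) :
  perm_eq vs (enum V) ->
  \sum_(v <- vs | P v) F v = \sum_(v | P v) F v.
Proof.
move=> Hp; rewrite (perm_big _ Hp) /=.
by rewrite big_enum_cond.
Qed.

Theorem lemma4 (R : realType) (V : finType) (e : rel V) (t : R) (w : V -> R)
  (vs : seq V) (s : R) (X Y : {set V}) :
  simple_graph e ->
  is_frac_chromatic_number e t ->
  (forall v, 0 <= w v) ->
  wsum w [set: V] = t ->
  (forall I : {set V}, independent e I -> wsum w I <= 1) ->
  perm_eq vs (enum V) ->
  sorted (fun a b => w b <= w a) vs ->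
  1 <= s ->
  X \subset Y ->
  sparse vs s Y X ->
  wsum w X <= s^-1 * wsum w Y.
Proof.
move=> _ _ w0 _ _ Hperm Hsort s1 XY /andP [_ /forallP Hsp].
have s0 : 0 < s by apply: lt_le_trans s1.
set ys := [seq x <- vs | x \in Y].
have trans : transitive (fun a b => w b <= w a).
  by move=> b a c Hab Hbc; apply: le_trans Hbc Hab.
have Hpw : pairwise (fun a b => w b <= w a) ys.
  by rewrite -sorted_pairwise //; apply: sorted_filter.
have HY : wsum w Y = \sum_(y <- ys) w y.
  by rewrite big_filter sum_vs.
have HX : wsum w X = \sum_(y <- ys) (y \in X)%:R * w y.
  rewrite big_filter (big_mkcond (fun v => v \in Y)) sum_vs // /wsum.
  rewrite big_mkcond /=; apply: eq_bigr => v _.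
  case vX: (v \in X); last by case: (v \in Y); rewrite ?mul0r.
  by rewrite (subsetP XY) // mul1r.
have key : 0 <= \sum_(y <- ys) (1 - s * (y \in X)%:R) * w y.
  have := @abel R V (fun y => 1 - s * (y \in X)%:R) w ys 0 _ Hpw.
  rewrite mulr0; apply => //.
  move=> i Hi; rewrite sum_e size_takel // subr_ge0.
  rewrite leNgt; apply/negP => Hlt.
  pose Z := [set y in [seq y <- take i ys | y \in X]].
  have cZ : #|Z| = count (fun y => y \in X) (take i ys).
    rewrite cardsE -size_filter; apply/card_uniqP.
    by apply/filter_uniq/take_uniq/filter_uniq; rewrite (perm_uniq Hperm) enum_uniq.
  have ZX : Z \subset X.
    by apply/subsetP => y; rewrite inE mem_filter => /andP [].
  have ys_in : forall k y, y \in take k ys -> y \in Y.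
    by move=> k y /mem_take; rewrite mem_filter => /andP [].
  have := Hsp Z; rewrite ZX /= => /negP; apply; rewrite /principal.
  apply/and3P; split.
  - apply/set0Pn.
    have : (0 < count (fun y => y \in X) (take i ys))%N.
      rewrite lt0n; apply/negP => /eqP c0; move: Hlt.
      by rewrite c0 mulr0 ltNge ler0n.
    rewrite -has_count => /hasP [y Hy yX]; exists y.
    by rewrite inE mem_filter yX.
  - apply/subsetP => y; rewrite inE mem_filter => /andP [_]; exact: ys_in.
  - apply/subsetP => y; rewrite inE mem_filter /first_k inE => /andP [_ Hy].
    suff Hk : (i <= Num.truncn (s * #|Z|%:R))%N.
      by move: Hy; rewrite -(take_takel ys Hk) => /mem_take.
    rewrite truncn_ge_nat ?cZ; first exact: ltW.
    by rewrite mulr_ge0 // ltW.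
rewrite HX HY mulrC ler_pdivlMr //.
have E : \sum_(y <- ys) (1 - s * (y \in X)%:R) * w y =
  \sum_(y <- ys) w y - (\sum_(y <- ys) (y \in X)%:R * w y) * s.
  by rewrite mulr_suml -sumrB; apply: eq_bigr => y _; ring.
by rewrite -subr_ge0 -E.
Qed.
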